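(* For every $\varepsilon_0\in[0,1/4)$ and integer $w\ge1$, any $\varepsilon_0$-error online algorithm computing the width-$w$ $\mathrm{Tribes}$ function on the $\mathrm{Tribes}$ instance must reveal $\Omega(2^w)$ tribes in expectation (the implied constant may depend on $\varepsilon_0$ but not on $w$).
   Context: The $\mathrm{Tribes}$ instance of width $w$: variables $(x_{i,j})_{i\in[2^w],j\in[w]}$, $f(x)=\bigvee_{i=1}^{2^w}\bigwedge_{j=1}^w x_{i,j}$, input $x$ uniform, and for each $i$ the costs $(c_{i,1},\dots,c_{i,w})$ are an independent uniformly random permutation of $[w]$. Online priced query model: the algorithm maintains investments $\theta$ (initially $0$), increasing one coordinate by a positive amount per step; $x_{i,j}$ is revealed once $\theta_{i,j}\ge c_{i,j}$. An algorithm reveals the $i$-th tribe if at least one of $x_{i,1},\dots,x_{i,w}$ is revealed to it. It is $\varepsilon_0$-error if it outputs $f(x)$ except with probability at most $\varepsilon_0$ over the input, costs and its randomness. *)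

(* Defs.v *)
From mathcomp Require Import all_boot all_order all_algebra.
From mathcomp Require Import perm.
From mathcomp Require Import all_classical all_reals all_analysis.

Set Implicit Arguments.
Unset Strict Implicit.
Unset Printing Implicit Defensive.

Import Order.TTheory GRing.Theory Num.Theory.
Local Open Scope ring_scope.

(* Variables x_{i,j}, i in [2^w] (tribe), j in [w] (position in tribe). *)
Definition tvar (w : nat) := ('I_(2 ^ w) * 'I_w)%type.

Definition tinput (w : nat) := {ffun tvar w -> bool}.
(* for each tribe i, a permutation sigma_i of [w]; c_{i,j} = sigma_i(j) + 1 in {1..w} *)
Definition tcosts (w : nat) := {ffun 'I_(2 ^ w) -> {perm 'I_w}}.

Definition cost (w : nat) (c : tcosts w) (v : tvar w) : nat := (c v.1 v.2).+1.

Definition tribes_fun (w : nat) (x : tinput w) : bool :=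
  [exists i : 'I_(2 ^ w), [forall j : 'I_w, x (i, j)]].

(* One step of interaction: the algorithm increased theta_v by amount a and
   observed whether x_v is now revealed (Some value) or not (None). *)
Record obs (R : realType) (w : nat) := Obs {
  ob_var : tvar w; ob_amt : R; ob_val : option bool }.

Inductive action (R : realType) (w : nat) :=
| Output of bool
| Invest of tvar w & R.

Definition det_alg (R : realType) (w : nat) := seq (obs R w) -> action R w.

Definition valid_alg (R : realType) (w : nat) (A : det_alg R w) : Prop :=
  forall h v a, A h = Invest v a -> 0 < a.

Record state (R : realType) (w : nat) := St {
  st_out : option bool; st_hist : seq (obs R w); st_theta : tvar w -> R }.

Definition step (R : realType) (w : nat) (A : det_alg R w) (x : tinput w)
  (c : tcosts w) (s : state R w) : state R w :=
  match st_out s with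
  | Some _ => s
  | None =>
    match A (st_hist s) with
    | Output b => St (Some b) (st_hist s) (st_theta s)
    | Invest v a =>
        let th := fun u => if u == v then st_theta s u + a else st_theta s u in
        let o := if ((cost c v)%:R <= th v) then Some (x v) else None in
        St None (rcons (st_hist s) (Obs v a o)) th
    end
  end.

Fixpoint run (R : realType) (w : nat) (A : det_alg R w) (x : tinput w)
  (c : tcosts w) (n : nat) : state R w :=
  match n with
  | 0 => St None [::] (fun _ => 0)
  | n.+1 => step A x c (run A x c n)
  end.

Definition reveals_tribe (R : realType) (w : nat) (A : det_alg R w)
  (x : tinput w) (c : tcosts w) (i : 'I_(2 ^ w)) : Prop :=
  exists n (j : 'I_w), (cost c (i, j))%:R <= st_theta (run A x c n) (i, j).

Definition num_revealed (R : realType) (w : nat) (A : det_alg R w)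
  (x : tinput w) (c : tcosts w) : nat :=
  #|[set i : 'I_(2 ^ w) | `[< reveals_tribe A x c i >]]|.

Definition outputs_correctly (R : realType) (w : nat) (A : det_alg R w)
  (x : tinput w) (c : tcosts w) : Prop :=
  exists n, st_out (run A x c n) = Some (tribes_fun x).

Definition errs (R : realType) (w : nat) (A : det_alg R w)
  (x : tinput w) (c : tcosts w) : bool :=
  ~~ `[< outputs_correctly A x c >].

Definition avg_xc (R : realType) (w : nat) (F : tinput w -> tcosts w -> R) : R :=
  (#|{: tinput w}| * #|{: tcosts w}|)%:R^-1 *
  \sum_(x : tinput w) \sum_(c : tcosts w) F x c.

(* A randomized algorithm: a random seed om drawn from probability P selects a
   deterministic algorithm A om; its behaviour must be measurable in the seed. *)
Definition randomized_alg (R : realType) (w : nat) (d : measure_display)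
  (Om : measurableType d) (A : Om -> det_alg R w) : Prop :=
  [/\ forall om, valid_alg (A om),
      forall x c, measurable_fun setT (fun om => ((errs (A om) x c)%:R : R)) &
      forall x c, measurable_fun setT (fun om => ((num_revealed (A om) x c)%:R : R))].

Definition error_prob (R : realType) (w : nat) (d : measure_display)
  (Om : measurableType d) (P : probability Om R) (A : Om -> det_alg R w) : \bar R :=
  (\int[P]_om (avg_xc (fun x c => ((errs (A om) x c)%:R : R)))%:E)%E.

Definition expected_revealed (R : realType) (w : nat) (d : measure_display)
  (Om : measurableType d) (P : probability Om R) (A : Om -> det_alg R w) : \bar R :=
  (\int[P]_om (avg_xc (fun x c => ((num_revealed (A om) x c)%:R : R)))%:E)%E.

(* Main.v *)
Require Import Defs.
From mathcomp Require Import all_boot all_order all_algebra.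
From mathcomp Require Import perm.
From mathcomp Require Import all_classical all_reals all_analysis.
From mathcomp Require Import measurable_realfun.
From mathcomp Require Import ring lra zify.
Import Order.TTheory GRing.Theory Num.Theory.
Local Open Scope ring_scope.
Set Implicit Arguments.
Unset Strict Implicit.

Definition unrev (R : realType) (w : nat) (A : det_alg R w) (x : tinput w) (c : tcosts w)
  (i : 'I_(2 ^ w)) : Prop :=
  forall n (j : 'I_w), ~ ((cost c (i, j))%:R <= st_theta (run A x c n) (i, j)).

Lemma step_eq (R : realType) (w : nat) (A : det_alg R w) (x x' : tinput w) (c : tcosts w)
  (i : 'I_(2 ^ w)) (s : state R w) :
  (forall v, v.1 != i -> x v = x' v) ->
  (forall j : 'I_w, ~ ((cost c (i, j))%:R <= st_theta (step A x c s) (i, j))) ->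
  step A x c s = step A x' c s.
Proof.
move=> hx hu; move: hu; rewrite /step.
case: (st_out s) => // .
case: (A (st_hist s)) => // v a hu.
case: (boolP (v.1 == i)) => [/eqP vi | vi].
- have H : ~ ((cost c v)%:R <= st_theta s v + a).
    have := hu v.2; rewrite /= -vi -surjective_pairing eqxx; exact.
  by rewrite eqxx; case: ifP.
- by rewrite hx.
Qed.

Lemma run_eq (R : realType) (w : nat) (A : det_alg R w) (x x' : tinput w) (c : tcosts w)
  (i : 'I_(2 ^ w)) :
  (forall v, v.1 != i -> x v = x' v) -> unrev A x c i ->
  forall n, run A x c n = run A x' c n.
Proof.
move=> hx hu; elim=> [//|n IH] /=.
rewrite (step_eq hx); first by rewrite IH.
by move=> j; apply: (hu n.+1 j).
Qed.

Lemma out_persist (R : realType) (w : nat) (A : det_alg R w) (x : tinput w) (c : tcosts w)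
  n k b : st_out (run A x c n) = Some b -> st_out (run A x c (n + k)) = Some b.
Proof.
move=> h; elim: k => [|k IH]; first by rewrite addn0.
by rewrite addnS /= /step IH.
Qed.

Lemma sum_ind (I : finType) (P : pred I) : (\sum_i (P i : nat) = #|P|)%N.
Proof. rewrite -sum1_card [RHS]big_mkcond /=. apply: eq_bigr => i _; rewrite unfold_in; by case: (P i). Qed.

Definition revset (R : realType) (w : nat) (A : det_alg R w) (x : tinput w) (c : tcosts w) :=
  [set i : 'I_(2 ^ w) | `[< reveals_tribe A x c i >]].

Definition setone (w : nat) (i : 'I_(2 ^ w)) (x : tinput w) : tinput w :=
  [ffun v => if v.1 == i then true else x v].

Definition Sset (R : realType) (w : nat) (A : det_alg R w) (c : tcosts w) (i : 'I_(2 ^ w)) :=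
  [set x : tinput w | [&& ~~ tribes_fun x, ~~ errs A x c & i \notin revset A x c]].

Definition Tset (R : realType) (w : nat) (A : det_alg R w) (c : tcosts w) (i : 'I_(2 ^ w)) :=
  [set x : tinput w | [&& errs A x c, [forall j, x (i, j)] &
     [forall k, (k != i) ==> ~~ [forall j, x (k, j)]]]].

Lemma notrev_unrev (R : realType) (w : nat) (A : det_alg R w) (x : tinput w) (c : tcosts w) i :
  ~~ `[< reveals_tribe A x c i >] -> unrev A x c i.
Proof.
move=> /asboolPn hn n j hle; apply: hn; by exists n, j.
Qed.

Lemma S_to_T (R : realType) (w : nat) (A : det_alg R w) (c : tcosts w) i x :
  x \in Sset A c i -> setone i x \in Tset A c i.
Proof.
rewrite !inE => /and3P [hf he hr].
have hx : forall v, v.1 != i -> x v = setone i x v.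
  by move=> v hv; rewrite /setone ffunE (negbTE hv).
have hrun := run_eq hx (notrev_unrev hr).
apply/and3P; split.
- apply/negP => /asboolP [n' hn'].
  move/negPn: he => /asboolP [n hn].
  have ft : tribes_fun (setone i x).
    by apply/existsP; exists i; apply/forallP => j; rewrite /setone ffunE eqxx.
  rewrite ft in hn'.
  rewrite (negbTE hf) hrun in hn.
  have h1 := out_persist n' hn.
  have h2 := out_persist n hn'.
  by rewrite addnC h2 in h1.
- by apply/forallP => j; rewrite /setone ffunE eqxx.
- apply/forallP => k; apply/implyP => hk; apply/negP => /forallP hall.
  move/negP: hf; apply; apply/existsP; exists k; apply/forallP => j.
  by have := hall j; rewrite /setone ffunE /= (negbTE hk).
Qed.

Lemma card_S_T (R : realType) (w : nat) (A : det_alg R w) (c : tcosts w) i :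
  (#|Sset A c i| <= 2 ^ w * #|Tset A c i|)%N.
Proof.
pose h := fun x : tinput w => ([ffun j : 'I_w => x (i, j)] : {ffun 'I_w -> bool}, setone i x).
have hinj : injective h.
  move=> x y [] e1 e2; apply/ffunP => v.
  case: (boolP (v.1 == i)) => [/eqP vi | vi].
  - have := congr1 (fun g : {ffun 'I_w -> bool} => g v.2) e1; rewrite !ffunE.
    by rewrite -vi -surjective_pairing.
  - have := congr1 (fun g : tinput w => g v) e2; by rewrite /setone !ffunE (negbTE vi).
have hc : #|[set: {ffun 'I_w -> bool}]| = (2 ^ w)%N.
  by rewrite cardsT card_ffun card_bool card_ord.
apply: (@leq_trans #|finset.setX [set: {ffun 'I_w -> bool}] (Tset A c i)|); last by rewrite cardsX hc.
rewrite -(card_imset _ hinj); apply: subset_leq_card; apply/fintype.subsetP => p /imsetP [x hx ->].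
by apply/finset.setXP; split; [exact: finset.in_setT | exact: S_to_T].
Qed.

Lemma sum_inds (I : finType) (P : {set I}) : (\sum_i (i \in P : nat) = #|P|)%N.
Proof. rewrite -sum1_card [RHS]big_mkcond /=; apply: eq_bigr => i _; by case: (i \in P). Qed.

Lemma per_x (R : realType) (w : nat) (A : det_alg R w) (c : tcosts w) (x : tinput w) :
  ((~~ tribes_fun x : nat) * 2 ^ w <= num_revealed A x c
     + 2 ^ w * (~~ tribes_fun x && errs A x c : nat)
     + \sum_i (x \in Sset A c i : nat))%N.
Proof.
case: (boolP (tribes_fun x)) => hf //=; rewrite mul1n.
have hN : (2 ^ w = num_revealed A x c + #|~: revset A x c|)%N.
  by rewrite cardsC card_ord.
rewrite {1}hN -addnA leq_add2l.
case: (boolP (errs A x c)) => he /=.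
- rewrite muln1; apply: leq_trans (leq_addr _ _).
  by rewrite -[X in (_ <= X)%N](card_ord (2 ^ w)); apply: max_card.
- rewrite muln0 add0n sum_ind; apply: subset_leq_card; apply/fintype.subsetP => i hi.
  by rewrite unfold_in /Sset inE hf he /=; rewrite inE in hi.
Qed.

Lemma per_x2 (R : realType) (w : nat) (A : det_alg R w) (c : tcosts w) (x : tinput w) :
  ((~~ tribes_fun x && errs A x c : nat) + \sum_i (x \in Tset A c i : nat) <= errs A x c)%N.
Proof.
case: (boolP [exists i, x \in Tset A c i]) => [/existsP [i hi] | hn].
- have hi' := hi; rewrite inE in hi'; case/and3P: hi' => he hall hoth.
  have hf : tribes_fun x by apply/existsP; exists i.
  rewrite hf he /= (bigD1 i) //= hi big1 // => k hk.
  apply/eqP; rewrite eqb0; rewrite inE; apply/negP => /and3P [_ _ /forallP hk'].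
  by have := hk' i; rewrite eq_sym hk /= hall.
- rewrite big1 ?addn0; first by case: (errs A x c); rewrite ?andbF ?andbT //; case: (~~ _).
  move=> i _; apply/eqP; rewrite eqb0; apply/negP => hi; move/negP: hn; apply.
  by apply/existsP; exists i.
Qed.

Lemma count_main (R : realType) (w : nat) (A : det_alg R w) (c : tcosts w) :
  (2 ^ w * #|[set x : tinput w | ~~ tribes_fun x]| <=
     \sum_x num_revealed A x c + 2 ^ w * \sum_x (errs A x c : nat))%N.
Proof.
have e1 : (2 ^ w * #|[set x : tinput w | ~~ tribes_fun x]| =
           \sum_(x : tinput w) ((~~ tribes_fun x : nat) * 2 ^ w))%N.
  rewrite -bigop.big_distrl /= mulnC; congr (_ * _)%N; rewrite -sum_inds.
  apply: eq_bigr => x _; by rewrite inE.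
rewrite e1.
apply: (@leq_trans (\sum_(x : tinput w) (num_revealed A x c + 2 ^ w * (~~ tribes_fun x && errs A x c : nat) + \sum_i (x \in Sset A c i : nat)))); first by apply: leq_sum => x _; exact: per_x.
rewrite !big_split /= -addnA leq_add2l.
rewrite -big_distrr /=.
have e2 : (\sum_x \sum_i (x \in Sset A c i : nat) <=
           2 ^ w * \sum_(x : tinput w) \sum_i (x \in Tset A c i : nat))%N.
  rewrite exchange_big [X in (_ <= _ * X)%N]exchange_big /= big_distrr /=.
  apply: leq_sum => i _; rewrite !sum_ind; exact: card_S_T.
apply: (leq_trans (leq_add (leqnn _) e2)).
rewrite -mulnDr leq_mul2l; apply/orP; right.
rewrite -big_split /=; apply: leq_sum => x _; exact: per_x2.
Qed.

Lemma integ (R : realType) (d : measure_display) (Om : measurableType d)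
  (P : probability Om R) (r e : Om -> R) (N eps : R) :
  measurable_fun setT r -> measurable_fun setT e ->
  (forall om, 0 <= r om) -> (forall om, 0 <= e om) -> 0 <= N ->
  (forall om, N / 4 <= r om + N * e om) ->
  (\int[P]_om (e om)%:E <= eps%:E)%E ->
  (((4^-1 - eps) * N)%:E <= \int[P]_om (r om)%:E)%E.
Proof.
move=> mr me r0 e0 N0 hle he.
have mrE : measurable_fun setT (EFin \o r) by apply/measurable_EFinP.
have meE : measurable_fun setT (EFin \o e) by apply/measurable_EFinP.
have h1 : ((N / 4)%:E <= \int[P]_om (r om + N * e om)%:E)%E.
  have -> : ((N / 4)%:E = \int[P]_om (cst (N / 4)%:E om))%E.
    rewrite integral_cst // -[LHS]mule1; congr (_ * _)%E; symmetry; exact: probability_setT.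
  apply: ge0_le_integral => //.
  all: try (move=> om _ /=; rewrite lee_fin; apply: divr_ge0 => //; fail).
  all: try (exact: measurable_cst).
  all: try (by move=> om _; rewrite lee_fin /=).
  apply/measurable_EFinP; apply: measurable_funD => //.
  apply: measurable_funM => //; exact: measurable_cst.
have h2 : (\int[P]_om (r om + N * e om)%:E =
           \int[P]_om (r om)%:E + N%:E * \int[P]_om (e om)%:E)%E.
  under eq_integral do rewrite EFinD EFinM.
  rewrite ge0_integralD //.
  - rewrite ge0_integralZl //.
    by move=> om _; rewrite lee_fin.
  - by move=> om _; rewrite lee_fin.
  - by move=> om _; rewrite lee_fin; apply: mulr_ge0.
  - apply/measurable_EFinP; apply: measurable_funM => //; exact: measurable_cst.
have ie0 : (0 <= \int[P]_om (e om)%:E)%E.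
  by apply: integral_ge0 => om _; rewrite lee_fin.
have ir0 : (0 <= \int[P]_om (r om)%:E)%E.
  by apply: integral_ge0 => om _; rewrite lee_fin.
move: h1; rewrite h2.
move: ie0 he; case: (\int[P]_om (e om)%:E)%E => [ie| |] //= ie0 he.
move: ir0; case: (\int[P]_om (r om)%:E)%E => [ir| |] //= ir0.
- rewrite -EFinM -EFinD !lee_fin => h.
  rewrite lee_fin in ie0 he.
  have : N * ie <= N * eps by apply: ler_wpM2l.
  move=> h3; rewrite mulrBl; lra.
- by move=> _; rewrite leey.
Qed.

Lemma bern b k : ((b + 1) ^ k.+1 <= b ^ k.+1 + k.+1 * (b + 1) ^ k)%N.
Proof.
elim: k => [|k IH]; first by rewrite !expn1 expn0 muln1.
have hY : (b ^ k.+1 <= (b + 1) ^ k.+1)%N by rewrite leq_exp2r // leq_addr.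
have hX : ((b + 1) ^ k.+2 = (b + 1) * (b + 1) ^ k.+1)%N by rewrite expnS.
have hX2 : ((b + 1) ^ k.+1 = (b + 1) * (b + 1) ^ k)%N by rewrite expnS.
have hb : (b ^ k.+2 = b * b ^ k.+1)%N by rewrite expnS.
have hm : ((b + 1) * (b + 1) ^ k.+1 <= (b + 1) * (b ^ k.+1 + k.+1 * (b + 1) ^ k))%N.
  by rewrite leq_mul2l IH orbT.
rewrite hX hb; nia.
Qed.

Lemma half_bound M : (0 < M)%N -> ((2 * M) ^ M <= 2 * (2 * M - 1) ^ M)%N.
Proof.
case: M => [//|m] _.
have := bern (2 * m.+1 - 1) m.
have -> : (2 * m.+1 - 1 + 1 = 2 * m.+1)%N by lia.
have e : ((2 * m.+1) ^ m.+1 = 2 * m.+1 * (2 * m.+1) ^ m)%N by rewrite expnS.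
rewrite e; nia.
Qed.

Lemma num_bound w : (1 <= w)%N -> (2 ^ (2 ^ w * w) <= 4 * (2 ^ w).-1 ^ (2 ^ w))%N.
Proof.
case: w => [//|k] _.
have hM : (0 < 2 ^ k)%N by rewrite expn_gt0.
have h := half_bound hM.
have eN : (2 ^ k.+1 = 2 * 2 ^ k)%N by rewrite expnS.
have e1 : (2 ^ (2 ^ k.+1 * k.+1) = ((2 * 2 ^ k) ^ 2 ^ k) ^ 2)%N.
  rewrite -eN -!expnM; congr (2 ^ _)%N; rewrite eN; nia.
have e2 : ((2 ^ k.+1).-1 ^ 2 ^ k.+1 = ((2 * 2 ^ k - 1) ^ 2 ^ k) ^ 2)%N.
  rewrite -expnM eN; congr (_ ^ _)%N; lia.
rewrite e1 e2.
set a := ((2 * 2 ^ k) ^ 2 ^ k)%N in h *.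
set b := ((2 * 2 ^ k - 1) ^ 2 ^ k)%N in h *.
have -> : (a ^ 2 = a * a)%N by rewrite expnS expn1.
have -> : (b ^ 2 = b * b)%N by rewrite expnS expn1.
have := leq_mul h h; nia.
Qed.

Lemma card_F0 w : (1 <= w)%N ->
  (#|{: tinput w}| <= 4 * #|[set x : tinput w | ~~ tribes_fun x]|)%N.
Proof.
move=> hw.
have hX : #|{: tinput w}| = (2 ^ (2 ^ w * w))%N.
  by rewrite card_ffun card_bool card_prod !card_ord.
pose G := [set~ ([ffun=> true] : {ffun 'I_w -> bool})].
pose uncur := fun g : {ffun 'I_(2 ^ w) -> {ffun 'I_w -> bool}} =>
  ([ffun v : tvar w => g v.1 v.2] : tinput w).
have inj : injective uncur.
  move=> g1 g2 e; apply/ffunP => i; apply/ffunP => j.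
  by have := congr1 (fun x : tinput w => x (i, j)) e; rewrite !ffunE.
have hc : #|@ffun_on 'I_(2 ^ w) G| = ((2 ^ w).-1 ^ (2 ^ w))%N.
  by rewrite (card_ffun_on 'I_(2 ^ w) G) cardsC1 card_ffun card_bool !card_ord.
rewrite hX. apply: (leq_trans (num_bound hw)). rewrite leq_mul2l /= -hc -(card_imset _ inj).
apply: subset_leq_card; apply/fintype.subsetP => x /imsetP [g hg ->].
rewrite inE; apply/negP => /existsP [i /forallP hi].
have := (ffun_onP hg) i; rewrite !inE => /negP; apply; apply/eqP/ffunP => j.
by have := hi j; rewrite !ffunE /= => ->.
Qed.

Lemma per_om (R : realType) (w : nat) (A : det_alg R w) : (1 <= w)%N ->
  (2 ^ w)%:R / 4 <= avg_xc (fun x c => ((num_revealed A x c)%:R : R))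
     + (2 ^ w)%:R * avg_xc (fun x c => ((errs A x c)%:R : R)).
Proof.
move=> hw.
set X := #|{: tinput w}|; set Cn := #|{: tcosts w}|.
set SR := (\sum_(c : tcosts w) \sum_(x : tinput w) num_revealed A x c)%N.
set SE := (\sum_(c : tcosts w) \sum_(x : tinput w) (errs A x c : nat))%N.
have hnat : (2 ^ w * (X * Cn) <= 4 * (SR + 2 ^ w * SE))%N.
  have h2 : (\sum_(c : tcosts w) (2 ^ w * #|[set x : tinput w | ~~ tribes_fun x]|) <=
      \sum_(c : tcosts w) (\sum_x num_revealed A x c + 2 ^ w * \sum_x (errs A x c : nat)))%N.
    by apply: leq_sum => c _; exact: count_main.
  rewrite big_split /= -!big_distrr /= in h2.
  rewrite sum_nat_const -/SR -/SE in h2.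
  have hF := card_F0 hw.
  have hC : #|xpredT : pred (tcosts w)| = Cn by [].
  rewrite hC -/X in h2 hF.
  have := leq_mul (leqnn (2 ^ w * Cn)) hF.
  move=> h; set f := #|[set x | _]| in h h2 hF *; set N := (2 ^ w)%N in h h2 *.
  clearbody X Cn SR SE f N; nia.
have eR : \sum_(x : tinput w) \sum_(c : tcosts w) ((num_revealed A x c)%:R : R) = SR%:R.
  rewrite /SR exchange_big natr_sum /=; apply: eq_bigr => c _; by rewrite natr_sum.
have eE : \sum_(x : tinput w) \sum_(c : tcosts w) (((errs A x c : nat))%:R : R) = SE%:R.
  rewrite /SE exchange_big natr_sum /=; apply: eq_bigr => c _; by rewrite natr_sum.
rewrite /avg_xc eR eE -/X -/Cn.
have hX0 : (0 < X)%N by apply/card_gt0P; exists [ffun=> true].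
have hC0 : (0 < Cn)%N by apply/card_gt0P; exists [ffun=> 1%g].
have hK : 0 < ((X * Cn)%N%:R : R) by rewrite ltr0n muln_gt0 hX0 hC0.
have hR : ((2 ^ w)%:R * (X * Cn)%:R <= 4 * (SR%:R + (2 ^ w)%:R * SE%:R) :> R).
  have := hnat; rewrite -(ler_nat R) !natrM natrD natrM.
  by rewrite [(4%:R)]/(4%:R) .
set k := ((X * Cn)%N%:R : R) in hK hR *.
set N := ((2 ^ w)%:R : R) in hR *.
have -> : k^-1 * SR%:R + N * (k^-1 * SE%:R) = k^-1 * (SR%:R + N * SE%:R) by ring.
rewrite -(ler_pM2l hK).
have -> : k * (k^-1 * (SR%:R + N * SE%:R)) = SR%:R + N * SE%:R by rewrite mulrA mulfV ?gt_eqF // mul1r.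
lra.
Qed.

Theorem mainTheorem13 (R : realType) (eps0 : R) :
  0 <= eps0 -> eps0 < 4^-1 ->
  exists C : R, 0 < C /\
    forall (w : nat), (1 <= w)%N ->
    forall (d : measure_display) (Om : measurableType d) (P : probability Om R)
           (A : Om -> det_alg R w),
      randomized_alg A ->
      (error_prob P A <= eps0%:E)%E ->
      ((C * (2 ^ w)%:R)%:E <= expected_revealed P A)%E.
Proof.
move=> e0 e4.
exists (4^-1 - eps0); split; first by rewrite subr_gt0.
move=> w hw d Om P A [hv merr mrev] herr.
rewrite /expected_revealed.
apply: (integ (e := fun om => avg_xc (fun x c => ((errs (A om) x c)%:R : R)))) => //.
- rewrite /avg_xc; apply: measurable_funM; first exact: measurable_cst.
  apply: measurable_sum => x; apply: measurable_sum => c; exact: mrev.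
- rewrite /avg_xc; apply: measurable_funM; first exact: measurable_cst.
  apply: measurable_sum => x; apply: measurable_sum => c; exact: merr.
- move=> om; rewrite /avg_xc; apply: mulr_ge0; first by rewrite invr_ge0.
  by apply: sumr_ge0 => x _; apply: sumr_ge0 => c _; exact: ler0n.
- move=> om; rewrite /avg_xc; apply: mulr_ge0; first by rewrite invr_ge0.
  by apply: sumr_ge0 => x _; apply: sumr_ge0 => c _; exact: ler0n.
- move=> om; exact: per_om.
Qed.
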